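(* Let $\mathcal{O}$ be the ring of integers of $\mathbb{Q}(\sqrt{-11})$ and $X=\frac12(1+\sqrt{-11})$. Let $n\ge0$ and $z=\sum_{j=0}^n\alpha_jX^j\in\mathcal{O}$ with $\alpha_j\in\{-1,0,1\}$. Then there exist $\beta_j\in\{-1,0,1\}$, $0\le j\le n+2$, such that $z+1=\sum_{j=0}^{n+2}\beta_jX^j$. *)

(* Defs.v *)
From mathcomp Require Import all_boot all_order all_algebra all_field.
Set Implicit Arguments. Unset Strict Implicit. Unset Printing Implicit Defensive.
Import Order.TTheory GRing.Theory Num.Theory.
Local Open Scope ring_scope.

(* We work inside algC (algebraic complex numbers), which contains
   Q(sqrt(-11)) and its ring of integers O = Z[X]. *)
Definition Xq : algC := (1 + sqrtC (- 11%:R)) / 2%:R.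

Definition digit (a : int) : bool := a \in [:: (-1)%R; 0%R; 1%R].

(* Main.v *)
Require Import Defs.
From mathcomp Require Import all_boot all_order all_algebra all_field.
From mathcomp Require Import ring.
Import Order.TTheory GRing.Theory Num.Theory.
Local Open Scope ring_scope.
Lemma X2 : Xq ^+ 2 = Xq - 3%:R.
Proof.
rewrite /Xq; set s := sqrtC _.
have hs : s ^+ 2 = - 11%:R by rewrite sqrtCK.
apply/eqP; rewrite -subr_eq0.
have -> : ((1 + s) / 2%:R) ^+ 2 - ((1 + s) / 2%:R - 3%:R) = (s ^+ 2 + 11%:R) / 4%:R.
  by field.
by rewrite hs addNr mul0r.
Qed.
Lemma keyid (al a b d a' b' : int) : al + a = d - 3 * b' -> b = a' + b' ->
  al%:~R + (a%:~R + b%:~R * Xq) = d%:~R + Xq * (a'%:~R + b'%:~R * Xq) :> algC.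
Proof.
move=> h1 h2.
have -> : al = d - 3 * b' - a by rewrite -h1; ring.
have -> : d%:~R + Xq * (a'%:~R + b'%:~R * Xq) = d%:~R + a'%:~R * Xq + b'%:~R * Xq ^+ 2 :> algC by ring.
rewrite X2 h2 !rmorphB !rmorphD !rmorphM /=. ring.
Qed.
Definition inS (a b : int) : bool :=
  (a, b) \in [:: (0,0); (1,0); (1,-1); (-1,0); (0,-1); (-1,1); (0,1)].
Definition dig (t : int) : int := if t == 2 then -1 else if t == -2 then 1 else t.
Definition qq (t : int) : int := if t == 2 then 1 else if t == -2 then -1 else 0.

Lemma step (al a b : int) : digit al -> inS a b ->
  exists d a' b', [/\ digit d, inS a' b' &
   al%:~R + (a%:~R + b%:~R * Xq) = d%:~R + Xq * (a'%:~R + b'%:~R * Xq) :> algC].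
Proof.
move=> Hal HS; exists (dig (al + a)), (qq (al + a) + b), (- qq (al + a)).
suff [H1 H2 H3 H4] : [/\ digit (dig (al + a)), inS (qq (al + a) + b) (- qq (al + a)),
  al + a = dig (al + a) - 3 * (- qq (al + a)) & b = (qq (al + a) + b) + (- qq (al + a))].
  by split => //; apply: keyid.
move: Hal; rewrite /digit !in_cons in_nil orbF => /or3P[]/eqP->;
move: HS; rewrite /inS !in_cons in_nil orbF;
move=> /orP[/eqP[-> ->]|/orP[/eqP[-> ->]|/orP[/eqP[-> ->]|/orP[/eqP[-> ->]|/orP[/eqP[-> ->]|/orP[/eqP[-> ->]|/eqP[-> ->]]]]]]];
by [].
Qed.

Lemma gen n : forall (alpha : nat -> int) (a b : int),
  (forall j, (j < n)%N -> digit (alpha j)) -> inS a b ->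
  exists beta : nat -> int, (forall j, (j < n.+2)%N -> digit (beta j)) /\
   \sum_(0 <= j < n) (alpha j)%:~R * Xq ^+ j + (a%:~R + b%:~R * Xq)
     = \sum_(0 <= j < n.+2) (beta j)%:~R * Xq ^+ j.
Proof.
elim: n => [|n IH] alpha a b Hal HS.
  have [Ha Hb] : digit a /\ digit b.
    move: HS; rewrite /inS !in_cons in_nil orbF;
    by move=> /orP[/eqP[-> ->]|/orP[/eqP[-> ->]|/orP[/eqP[-> ->]|/orP[/eqP[-> ->]|/orP[/eqP[-> ->]|/orP[/eqP[-> ->]|/eqP[-> ->]]]]]]].
  exists (fun j => if j == 0%N then a else if j == 1%N then b else 0); split.
    by case=> [|[|[|j]]].
  rewrite big_geq // add0r big_nat_recl // big_nat_recl // big_geq //=.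
  by rewrite expr0 mulr1 expr1 addr0.
have [d [a' [b' [Hd HS' E]]]] := @step (alpha 0%N) a b (Hal 0%N isT) HS.
have [gam [Hg Eg]] := IH (fun j => alpha j.+1) a' b' (fun j hj => Hal j.+1 hj) HS'.
exists (fun j => if j is j'.+1 then gam j' else d); split.
  by case=> [|j] //= hj; apply: Hg.
rewrite big_nat_recl // [in RHS]big_nat_recl // expr0 !mulr1 addrAC E -addrA; congr (_ + _).
have sh : forall g : nat -> int, \sum_(0 <= i < n.+2) (g i)%:~R * Xq ^+ i.+1 = Xq * \sum_(0 <= i < n.+2) (g i)%:~R * Xq ^+ i.
  by move=> g; rewrite mulr_sumr; apply: eq_bigr => i _; rewrite mulrCA -exprS.
have sh' : forall g : nat -> int, \sum_(0 <= i < n) (g i)%:~R * Xq ^+ i.+1 = Xq * \sum_(0 <= i < n) (g i)%:~R * Xq ^+ i.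
  by move=> g; rewrite mulr_sumr; apply: eq_bigr => i _; rewrite mulrCA -exprS.
by rewrite sh (sh' (fun j => alpha j.+1)) -mulrDr addrC Eg.
Qed.

Theorem lemma6p7 (n : nat) (alpha : nat -> int) :
  (forall j, (j <= n)%N -> digit (alpha j)) ->
  exists beta : nat -> int,
    (forall j, (j <= n.+2)%N -> digit (beta j)) /\
    (\sum_(0 <= j < n.+1) (alpha j)%:~R * Xq ^+ j) + 1
      = \sum_(0 <= j < n.+3) (beta j)%:~R * Xq ^+ j.
Proof.
move=> H.
have [beta [Hb E]] := @gen n.+1 alpha 1 0 H isT.
exists beta; split => //.
by rewrite -E mul0r addr0.
Qed.
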